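(* Let $\phi=\frac{1+\sqrt5}{2}$, let $\Gamma\subset SL_2(\mathbb R)$ be the group generated by $$\sigma_0=\begin{pmatrix}1&\phi\\0&1\end{pmatrix},\quad \sigma_1=\begin{pmatrix}\phi&\phi\\1&\phi\end{pmatrix},\quad \sigma_2=\begin{pmatrix}\phi&1\\\phi&\phi\end{pmatrix},\quad \sigma_3=\begin{pmatrix}1&0\\\phi&1\end{pmatrix},$$ and let $S=\{\gamma\binom{1}{0}:\gamma\in\Gamma\}$. For each integer $k>1$ let $$d_k=\begin{pmatrix}k(k+1)+(2k^2+k-2)\phi\\ \phi^2\end{pmatrix},$$ and let $j_k\in\mathbb Z$ be the integer such that $\phi^{-j_k}d_k\in S$ (equivalently, $\gcd_{\Gamma^+}(k(k+1)+(2k^2+k-2)\phi,\ \phi^2)=\phi^{j_k}$). Then for every $m\in\mathbb Z$, the set $\{k>1: j_k=m\}$ is finite.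
   Context: $\Gamma$ acts on $\mathbb R^2$ by matrix multiplication on column vectors. For $x,y\in\mathbb Z[\phi]$ not both zero, $\gcd_{\Gamma^+}(x,y)$ is the positive real $\lambda$ with $\lambda^{-1}\binom{|x|}{|y|}\in S$ (the representative of the gcd produced by the Davis–Lelièvre algorithm). Since the coordinates of $d_k$ are coprime in $\mathbb Z[\phi]$ and the positive units of $\mathbb Z[\phi]$ are the powers of $\phi$, this gcd is of the form $\phi^{j_k}$ for a unique integer $j_k$. *)

(* Defs.v *)
From Stdlib Require Import Rdefinitions.
From HB Require Import structures.
From mathcomp Require Import all_boot all_order all_algebra.
From mathcomp Require Import Rstruct.
Set Implicit Arguments. Unset Strict Implicit. Unset Printing Implicit Defensive.
Import Order.TTheory GRing.Theory Num.Theory.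
Local Open Scope ring_scope.

Definition phi : R := (1 + Num.sqrt 5) / 2.

Definition mx2 (a b c d : R) : 'M[R]_2 :=
  \matrix_(i < 2, j < 2)
    if i == 0 then (if j == 0 then a else b) else (if j == 0 then c else d).

Definition cv2 (x y : R) : 'cV[R]_2 := \col_(i < 2) if i == 0 then x else y.

Definition sigma0 : 'M[R]_2 := mx2 1 phi 0 1.
Definition sigma1 : 'M[R]_2 := mx2 phi phi 1 phi.
Definition sigma2 : 'M[R]_2 := mx2 phi 1 phi phi.
Definition sigma3 : 'M[R]_2 := mx2 1 0 phi 1.

Definition is_generator (s : 'M[R]_2) : Prop :=
  s = sigma0 \/ s = sigma1 \/ s = sigma2 \/ s = sigma3.

Inductive inGamma : 'M[R]_2 -> Prop :=
  | inGamma1 : inGamma 1%:M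
  | inGammaM : forall s g, is_generator s -> inGamma g -> inGamma (s *m g)
  | inGammaV : forall s g, is_generator s -> inGamma g -> inGamma (invmx s *m g).

Definition inS (v : 'cV[R]_2) : Prop :=
  exists g, inGamma g /\ v = g *m cv2 1 0.

Definition d (k : nat) : 'cV[R]_2 :=
  cv2 ((k * (k + 1))%N%:R + ((2 * k ^ 2 + k)%N%:R - 2) * phi) (phi ^+ 2).

(* Main.v *)
Require Import Defs.
From Stdlib Require Import Rdefinitions.
From HB Require Import structures.
From mathcomp Require Import all_boot all_order all_algebra.
From mathcomp Require Import Rstruct.
From mathcomp Require Import ring lra zify.
From Stdlib Require Import Classical_Prop.
Import Order.TTheory GRing.Theory Num.Theory.
Local Open Scope ring_scope.

Lemma phiE : phi = (1 + Num.sqrt 5%:R) / 2%:R.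
Proof. reflexivity. Qed.

Lemma sqrt5 : Num.sqrt (5%:R : R) ^+ 2 = 5%:R.
Proof. by rewrite sqr_sqrtr // ler0n. Qed.

Lemma sqrt5_ge1 : 1 <= Num.sqrt (5%:R : R).
Proof. by rewrite -{1}sqrtr1 ler_sqrt ?ler0n // ?ler1n. Qed.

Lemma phi2 : phi ^+ 2 = phi + 1.
Proof.
rewrite phiE.
have h := sqrt5.
set s := Num.sqrt _ in h *.
apply/eqP; rewrite -subr_eq0; apply/eqP.
transitivity ((s ^+ 2 - 5%:R) / 4%:R); first by field.
by rewrite h subrr mul0r.
Qed.

Lemma phi2' : phi ^+ 2 - phi - 1 = 0.
Proof. rewrite phi2; ring. Qed.

Lemma phi_ge1 : 1 <= phi.
Proof. rewrite phiE; have := sqrt5_ge1; set s := Num.sqrt _; move=> h. lra. Qed.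

Lemma phi_gt0 : 0 < phi.
Proof. have := phi_ge1; lra. Qed.

Ltac phring Q :=
  apply/eqP; rewrite -subr_eq0; apply/eqP;
  transitivity ((phi ^+ 2 - phi - 1) * (Q : R)); [ring | by rewrite phi2' mul0r].
Definition Sf (p : R * R) : R * R := (- p.2, p.1).
Definition Uf (p : R * R) : R * R := (- p.2, p.1 + phi * p.2).
Definition Nf (p : R * R) : R * R := (- p.1, - p.2).
Definition Uinv (p : R * R) : R * R := (phi * p.1 + p.2, - p.1).

Inductive reach : R * R -> nat -> Prop :=
| rE1 : reach (1, 0) 0
| rE2 : reach (-1, 0) 0
| rS : forall p t, reach p t -> t <> 1%N -> reach (Sf p) 1
| rU : forall p t k, reach p t -> (t <= 1)%N -> (1 <= k <= 4)%N ->
    reach (iter k Uf p) k.+1.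

Definition O p := exists t, reach p t.

Lemma NfK p : Nf (Nf p) = p.
Proof. by case: p => x y; rewrite /Nf /= !opprK. Qed.

Lemma SfN p : Sf (Nf p) = Nf (Sf p).
Proof. by case: p => x y; rewrite /Nf /Sf /=. Qed.

Lemma UfN p : Uf (Nf p) = Nf (Uf p).
Proof. case: p => x y; rewrite /Nf /Uf /=; congr pair; ring. Qed.

Lemma iterN k p : iter k Uf (Nf p) = Nf (iter k Uf p).
Proof. elim: k => [//|k IH]; by rewrite !iterS IH UfN. Qed.

Lemma U1 x y : iter 1 Uf (x, y) = (- y, x + phi * y).
Proof. by []. Qed.

Lemma U2 x y : iter 2 Uf (x, y) = (- (x + phi * y), phi * x + phi * y).
Proof. rewrite iterS U1 /Uf /=; congr pair; (ring || phring y). Qed.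

Lemma U3 x y : iter 3 Uf (x, y) = (- (phi * x + phi * y), phi * x + y).
Proof. rewrite iterS U2 /Uf /=; congr pair; (ring || phring (x + y)). Qed.

Lemma U4 x y : iter 4 Uf (x, y) = (- (phi * x + y), x).
Proof. rewrite iterS U3 /Uf /=; congr pair; (ring || phring x). Qed.

Lemma U5 p : iter 5 Uf p = Nf p.
Proof. case: p => x y; rewrite iterS U4 /Uf /Nf /=; congr pair; ring. Qed.

Lemma reachN p t : reach p t -> reach (Nf p) t.
Proof.
elim=> {p t}.
- have -> : Nf (1, 0) = (-1, 0) by rewrite /Nf /= oppr0.
  exact: rE2.
- have -> : Nf (-1, 0) = (1, 0) by rewrite /Nf /= oppr0 opprK.
  exact: rE1.
- move=> p t _ IH Ht; rewrite -SfN; exact: rS IH Ht.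
- move=> p t k _ IH Ht Hk; rewrite -iterN; exact: rU IH Ht Hk.
Qed.

Lemma reach_inv p t : reach p t ->
  (t = 0%N /\ (p = (1, 0) \/ p = (-1, 0))) \/
  (t = 1%N /\ exists q t', reach q t' /\ t' <> 1%N /\ p = Sf q) \/
  (exists q t' k, reach q t' /\ (t' <= 1)%N /\ (1 <= k <= 4)%N /\ t = k.+1 /\ p = iter k Uf q).
Proof.
case=> [|||q t' k Hq Ht Hk]; [by left; split; auto|by left; split; auto| |].
- move=> q t' Hq Ht; right; left; split=> //; by exists q, t'.
- right; right; by exists q, t', k.
Qed.
Arguments reach_inv {p t}.

Lemma O_N p : O p -> O (Nf p).
Proof. case=> t H; exists t; exact: reachN. Qed.

Lemma O_S p : O p -> O (Sf p).
Proof.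
case=> t H.
have [Ht1|Ht1] := eqVneq t 1%N.
- subst t; have [[E _]|[[_ [q [t' [Hq [_ ->]]]]]|[q [t' [k [_ [_ [Hk [E _]]]]]]]]] := reach_inv H.
  + by [].
  + have -> : Sf (Sf q) = Nf q by case: q {Hq} => x y.
    by apply: O_N; exists t'.
  + lia.
- exists 1%N; apply: rS H _; exact/eqP.
Qed.

Lemma O_U p : O p -> O (Uf p).
Proof.
case=> t H.
have [[E _]|[[E _]|[q [t' [k [Hq [Ht' [Hk [E ->]]]]]]]]] := reach_inv H.
- exists 2%N; apply: (@rU _ _ 1 H); lia.
- exists 2%N; apply: (@rU _ _ 1 H); lia.
- have [k4|k4] := eqVneq k 4%N.
  + subst k; rewrite -iterS U5; apply: O_N; by exists t'.
  + exists k.+2; rewrite -iterS; apply: rU Hq Ht' _; lia.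
Qed.

Lemma O_Ui p : O p -> O (Uinv p).
Proof.
move=> H; have -> : Uinv p = Nf (iter 4 Uf p).
  case: p {H} => x y; rewrite U4 /Nf /Uinv /=; congr pair; ring.
by apply: O_N; do 4 apply: O_U.
Qed.

Definition Tf (p : R * R) : R * R := (p.1 + phi * p.2, p.2).
Definition Ti (p : R * R) : R * R := (p.1 - phi * p.2, p.2).

Lemma O_T p : O p -> O (Tf p).
Proof.
move=> H; have -> : Tf p = Nf (Sf (Uf p)).
  case: p {H} => x y; rewrite /Nf /Sf /Uf /Tf /=; congr pair; ring.
by apply/O_N/O_S/O_U.
Qed.

Lemma O_Ti p : O p -> O (Ti p).
Proof.
move=> H; have -> : Ti p = Uinv (Sf p).
  case: p {H} => x y; rewrite /Uinv /Sf /Ti /=; congr pair; ring.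
by apply/O_Ui/O_S.
Qed.

Lemma O_Si p : O p -> O (Nf (Sf p)).
Proof. by move=> H; apply/O_N/O_S. Qed.

Definition good (z : R) := z = 0 \/ 1 <= `|z|.
Definition Pq (p : R * R) := 0 <= p.1 /\ 0 <= p.2 /\ (p.1 = 0 \/ 1 <= p.1) /\ (p.2 = 0 \/ 1 <= p.2).
Definition Qn (p : R * R) := p.1 <= 0 /\ 0 <= p.2 /\ (p.1 = 0 \/ p.1 <= -1) /\ (p.2 = 0 \/ 1 <= p.2).
Definition Cp p := Pq p \/ Pq (Nf p).
Definition Cn p := Qn p \/ Qn (Nf p).

Lemma gl (a b x y : R) : 1 <= a -> 1 <= b -> 0 <= x -> 0 <= y -> (x = 0 \/ 1 <= x) ->
  (y = 0 \/ 1 <= y) -> (a * x + b * y = 0 \/ 1 <= a * x + b * y).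
Proof.
move=> ha hb hx hy [->|x1] [->|y1].
- by left; rewrite !mulr0 addr0.
- right; nra.
- right; nra.
- right; nra.
Qed.

Lemma PqU q k : Pq q -> (1 <= k <= 4)%N -> Qn (iter k Uf q).
Proof.
case: q => x y [/= hx [hy [gx gy]]] Hk.
have p1 := phi_ge1.
have gxy : forall a b : R, 1 <= a -> 1 <= b -> (a * x + b * y = 0 \/ 1 <= a * x + b * y).
  by move=> a b ha hb; apply: gl.
have n0 : forall z : R, z = 0 \/ 1 <= z -> - z = 0 \/ - z <= -1.
  move=> z [->|h]; [left; exact: oppr0 | right; lra].
case: k Hk => [|[|[|[|[|k]]]]] // _.
- rewrite U1 /Qn /=. have := gxy 1 phi (lexx _) p1; rewrite mul1r => h.
  split; first lra. split; first nra. by split; [apply: n0|].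
- rewrite U2 /Qn /=. have := gxy 1 phi (lexx _) p1; rewrite mul1r => h.
  have h2 := gxy phi phi p1 p1.
  split; first nra. split; first nra. by split; [apply: n0|].
- rewrite U3 /Qn /=. have h2 := gxy phi phi p1 p1.
  have := gxy phi 1 p1 (lexx _); rewrite mul1r => h.
  split; first nra. split; first nra. by split; [apply: n0|].
- rewrite U4 /Qn /=.
  have := gxy phi 1 p1 (lexx _); rewrite mul1r => h.
  split; first nra. split; first nra. by split; [apply: n0|].
Qed.

Lemma CpU q k : Cp q -> (1 <= k <= 4)%N -> Cn (iter k Uf q).
Proof.
move=> [h|h] hk; first by left; apply: PqU.
right; rewrite -iterN; exact: PqU.
Qed.

Lemma QnS p : Qn p -> Cp (Sf p).
Proof.
case: p => x y [/= hx [hy [gx gy]]]; right; rewrite /Pq /Nf /Sf /= opprK.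
split=> //; split; first lra; split=> //.
by case: gx => [->|h]; [left; rewrite oppr0|right; lra].
Qed.

Lemma CnS p : Cn p -> Cp (Sf p).
Proof.
move=> [h|h]; first exact: QnS.
have := QnS _ h; rewrite SfN /Cp NfK; tauto.
Qed.

Lemma reach_inv2 p t : reach p t ->
  (t = 0%N -> p = (1, 0) \/ p = (-1, 0)) /\ (t = 1%N -> Cp p) /\ ((2 <= t)%N -> Cn p).
Proof.
elim=> {p t}.
- split; [by left|split=> //].
- split; [by right|split=> //].
- move=> p t _ [I0 [I1 I2]] Ht; split=> //; split=> // _.
  case: t Ht I0 I1 I2 => [|[|t]] Ht I0 I1 I2 //.
  + have [->|->] := I0 erefl.
    * left; rewrite /Pq /Sf /= oppr0; split; first exact: lexx. split; first lra.
      split; [by left | by right].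
    * right; rewrite /Pq /Nf /Sf /= !oppr0 opprK; split; first exact: lexx. split; first lra.
      split; [by left | by right].
  + exact/CnS/I2.
- move=> p t k _ [I0 [I1 I2]] Ht Hk; split=> //; split=> [E|_]; first lia.
  apply: (CpU p k _ Hk).
  case: t Ht I0 I1 I2 => [|[|t]] Ht I0 I1 I2 //; last exact: I1.
  have [->|->] := I0 erefl.
  + left; rewrite /Pq /=; split; first lra. split; first exact: lexx.
    split; [by right | by left].
  + right; rewrite /Pq /Nf /= ?oppr0 opprK; split; first lra. split; first exact: lexx.
    split; [by right | by left].
Qed.

Lemma good_N z : good z -> good (- z).
Proof. by case=> [->|h]; [left; exact: oppr0 | right; rewrite normrN]. Qed.

Lemma Pq_good p : Pq p -> good p.1 /\ good p.2.
Proof.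
case: p => x y [/= hx [hy [gx gy]]]; split.
- by case: gx => [->|h]; [left|right; rewrite ger0_norm].
- by case: gy => [->|h]; [left|right; rewrite ger0_norm].
Qed.

Lemma Qn_good p : Qn p -> good p.1 /\ good p.2.
Proof.
case: p => x y [/= hx [hy [gx gy]]]; split.
- by case: gx => [->|h]; [left|right; rewrite ler0_norm //; lra].
- by case: gy => [->|h]; [left|right; rewrite ger0_norm].
Qed.

Lemma O_good p : O p -> good p.1 /\ good p.2.
Proof.
case=> t H; have [I0 [I1 I2]] := reach_inv2 _ _ H.
have gN : forall q, good q.1 /\ good q.2 -> good (Nf q).1 /\ good (Nf q).2.
  by move=> [x y] /= [g1 g2]; split; apply: good_N.
have gCp : forall q, Cp q -> good q.1 /\ good q.2.
  move=> q [h|h]; first exact: Pq_good.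
  by rewrite -(NfK q); apply: gN; apply: Pq_good.
have gCn : forall q, Cn q -> good q.1 /\ good q.2.
  move=> q [h|h]; first exact: Qn_good.
  by rewrite -(NfK q); apply: gN; apply: Qn_good.
case: t H I0 I1 I2 => [|[|t]] H I0 I1 I2.
- have [->|->] := I0 erefl; rewrite /good /= normr0 ?normrN normr1; split; by [right|left].
- exact/gCp/I1.
- exact/gCn/I2.
Qed.

Definition det2 (p q : R * R) := p.1 * q.2 - p.2 * q.1.

Lemma detS p q : det2 (Sf p) q = det2 p (Nf (Sf q)).
Proof. rewrite /det2 /Sf /Nf /=; ring. Qed.

Lemma detU p q : det2 (Uf p) q = det2 p (Uinv q).
Proof. rewrite /det2 /Uf /Uinv /=; ring. Qed.

Lemma detUk k p q : det2 (iter k Uf p) q = det2 p (iter k Uinv q).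
Proof.
elim: k q => [//|k IH] q.
by rewrite iterS detU IH iterSr.
Qed.

Lemma O_Uik k q : O q -> O (iter k Uinv q).
Proof. elim: k => [//|k IH] H; rewrite iterS; exact/O_Ui/IH. Qed.

Lemma pairwise p t : reach p t -> forall q, O q -> good (det2 p q).
Proof.
elim=> {p t}.
- move=> q /O_good [_ g]; by rewrite /det2 /= mul1r mul0r subr0.
- move=> q /O_good [_ g]; rewrite /det2 /= mulN1r mul0r subr0; exact: good_N.
- move=> p t _ IH _ q Hq; rewrite detS; apply: IH; exact: O_Si.
- move=> p t k _ IH _ _ q Hq; rewrite detUk; apply: IH; exact: O_Uik.
Qed.

Lemma O_Tn (n : nat) p : O p -> O (p.1 + n%:R * phi * p.2, p.2) /\ O (p.1 - n%:R * phi * p.2, p.2).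
Proof.
case: p => x y H; elim: n => [|n [IH1 IH2]] /=.
- by rewrite !mul0r addr0 subr0.
- split.
  + have := O_T _ IH1; rewrite /Tf /=; congr O; congr pair; rewrite mulrS; ring.
  + have := O_Ti _ IH2; rewrite /Ti /=; congr O; congr pair; rewrite mulrS; ring.
Qed.

Lemma O_Tz (n : int) x y : O (x, y) -> O (x + n%:~R * phi * y, y).
Proof.
move=> H; case: n => n.
- by have [h _] := O_Tn n _ H.
- have [_ h] := O_Tn n.+1 _ H; move: h => /=; congr O; congr pair.
  rewrite NegzE rmorphN /= -[(n.+1)%:~R]/(n.+1%:R); ring.
Qed.

Definition colpair (v : 'cV[R]_2) : R * R := (v 0 0, v 1 0).

Lemma mx2_mul (a b c e : R) (v : 'cV[R]_2) :
  colpair (mx2 a b c e *m v) = (a * v 0 0 + b * v 1 0, c * v 0 0 + e * v 1 0)%R.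
Proof.
have E0 : (ord0 : 'I_2) = 0 by apply/val_inj.
have E1 : lift ord0 ord0 = 1 :> 'I_2 by apply/val_inj.
by rewrite /colpair !mxE !big_ord_recl !big_ord0 !mxE /= !addr0 E0 E1.
Qed.

Lemma mx2_mulmx (a b c e a' b' c' e' : R) :
  mx2 a b c e *m mx2 a' b' c' e' =
  mx2 (a * a' + b * c')%R (a * b' + b * e')%R (c * a' + e * c')%R (c * b' + e * e')%R.
Proof.
have E0 : (ord0 : 'I_2) = 0 by apply/val_inj.
have E1 : lift ord0 ord0 = 1 :> 'I_2 by apply/val_inj.
apply/matrixP => i j; rewrite !mxE !big_ord_recl !big_ord0 !mxE /= !addr0 ?E0 ?E1.
by case: i => [[|[|i]] Hi] //; case: j => [[|[|j]] Hj].
Qed.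

Lemma mx2_1 : 1%:M = mx2 1%R 0%R 0%R 1%R :> 'M[R]_2.
Proof.
apply/matrixP => i j; rewrite !mxE.
by case: i => [[|[|i]] Hi] //; case: j => [[|[|j]] Hj].
Qed.

Lemma inv_of (A B : 'M[R]_2) : A *m B = 1%:M -> invmx A = B.
Proof.
move=> h; have [uA _] := mulmx1_unit h.
by rewrite -[RHS]mul1mx -(mulVmx uA) -mulmxA h mulmx1.
Qed.

Lemma s0E : sigma0 = mx2 1%R phi 0%R 1%R. Proof. reflexivity. Qed.
Lemma s1E : sigma1 = mx2 phi phi 1%R phi. Proof. reflexivity. Qed.
Lemma s2E : sigma2 = mx2 phi 1%R phi phi. Proof. reflexivity. Qed.
Lemma s3E : sigma3 = mx2 1%R 0%R phi 1%R. Proof. reflexivity. Qed.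

Lemma i0E : invmx sigma0 = mx2 1%R (- phi)%R 0%R 1%R.
Proof. apply: inv_of; rewrite s0E mx2_mulmx mx2_1; congr mx2; ring. Qed.
Lemma i1E : invmx sigma1 = mx2 phi (- phi)%R (-1)%R phi.
Proof. apply: inv_of; rewrite s1E mx2_mulmx mx2_1; congr mx2; (ring || phring (phi - phi + 1)). Qed.
Lemma i2E : invmx sigma2 = mx2 phi (-1)%R (- phi)%R phi.
Proof. apply: inv_of; rewrite s2E mx2_mulmx mx2_1; congr mx2; (ring || phring (phi - phi + 1)). Qed.
Lemma i3E : invmx sigma3 = mx2 1%R 0%R (- phi)%R 1%R.
Proof. apply: inv_of; rewrite s3E mx2_mulmx mx2_1; congr mx2; ring. Qed.

Lemma O_gen_step (F : R * R -> R * R) (G : R * R -> R * R) p :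
  (forall q, O q -> O (G q)) -> F p = G p -> O p -> O (F p).
Proof. by move=> HG -> /HG. Qed.

Lemma O_s (s : 'M[R]_2) (v : 'cV[R]_2) : is_generator s -> O (colpair v) ->
  O (colpair (s *m v)) /\ O (colpair (invmx s *m v)).
Proof.
move=> Hs; rewrite {1}/colpair => H.
set x := v 0 0 in H *; set y := v 1 0 in H *.
case: Hs => [->|[->|[->|->]]].
- rewrite i0E s0E !mx2_mul -/x -/y; split.
  + have := O_T _ H; rewrite /Tf /=; congr O; congr pair; ring.
  + have := O_Ti _ H; rewrite /Ti /=; congr O; congr pair; ring.
- rewrite i1E s1E !mx2_mul -/x -/y; split.
  + have := O_T _ (O_S _ (O_T _ H)); rewrite /Tf /Sf /=; congr O; congr pair; (ring || phring y).
  + have := O_Ti _ (O_Si _ (O_Ti _ H)); rewrite /Ti /Sf /Nf /=; congr O; congr pair; (ring || phring (- y)).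
- rewrite i2E s2E !mx2_mul -/x -/y; split.
  + have H3 : forall q, O q -> O (q.1, phi * q.1 + q.2).
      move=> [a b] Hq; have := O_S _ (O_Ti _ (O_Si _ Hq)); rewrite /Ti /Sf /Nf /=; congr O; congr pair; ring.
    have := H3 _ (O_Si _ (H3 _ H)); rewrite /Sf /Nf /=; congr O; congr pair; (ring || phring x).
  + have H3 : forall q, O q -> O (q.1, - phi * q.1 + q.2).
      move=> [a b] Hq; have := O_S _ (O_T _ (O_Si _ Hq)); rewrite /Tf /Sf /Nf /=; congr O; congr pair; ring.
    have := H3 _ (O_S _ (H3 _ H)); rewrite /Sf /Nf /=; congr O; congr pair; (ring || phring (- x)).
- rewrite i3E s3E !mx2_mul -/x -/y; split.
  + have := O_S _ (O_Ti _ (O_Si _ H)); rewrite /Ti /Sf /Nf /=; congr O; congr pair; ring.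
  + have := O_S _ (O_T _ (O_Si _ H)); rewrite /Tf /Sf /Nf /=; congr O; congr pair; ring.
Qed.

Lemma O_gamma g : inGamma g -> O (colpair (g *m cv2 1 0)).
Proof.
elim=> {g}.
- rewrite mul1mx /colpair !mxE /=; exists 0%N; exact: rE1.
- move=> s g Hs _ IH; rewrite -mulmxA; by have [] := O_s _ _ Hs IH.
- move=> s g Hs _ IH; rewrite -mulmxA; by have [] := O_s _ _ Hs IH.
Qed.

Lemma irr (a b : int) : a%:~R + b%:~R * phi = 0 -> b = 0.
Proof.
move=> h.
have hA : (a%:~R : R) = - (b%:~R * phi).
  by apply/eqP; rewrite -addr_eq0; apply/eqP.
have e : ((a ^+ 2 + a * b - b ^+ 2)%:~R : R) = 0.
  rewrite rmorphB rmorphD /= !rmorphXn /= rmorphM /= hA.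
  phring ((b%:~R : R) ^+ 2).
have e' : a ^+ 2 + a * b - b ^+ 2 = 0 by apply/eqP; rewrite -(intr_eq0 R); apply/eqP.
have E : (2 * a + b) ^+ 2 = 5 * b ^+ 2.
  apply/eqP; rewrite -subr_eq0; apply/eqP.
  transitivity (4 * (a ^+ 2 + a * b - b ^+ 2)); first ring.
  by rewrite e' mulr0.
apply/eqP; apply/negPn/negP => bn0.
have N := congr1 absz E; rewrite abszX abszM abszX /= in N.
set P := `|(2 * a + b)%R|%N in N; set Q := `|b|%N in N.
have Q0 : (0 < Q)%N by rewrite absz_gt0.
have P0 : (0 < P)%N.
  rewrite lt0n; apply/negP => /eqP P0; rewrite P0 in N.
  have : (0 < 5 * Q ^ 2)%N by rewrite muln_gt0 expn_gt0 Q0.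
  by rewrite -N.
have N' : (P ^ 2 = 5 * Q ^ 2)%N by rewrite N.
have L := congr1 (logn 5) N'.
rewrite lognM // ?expn_gt0 ?Q0 // !lognX (@logn_prime 5 5) // in L.
lia.
Qed.

Lemma php (B : nat) : forall (K : nat -> Prop) (g : nat -> int),
  (forall k, K k -> 0 <= g k < B%:Z) ->
  (forall k l, K k -> K l -> g k = g l -> k = l) ->
  exists N, forall k, K k -> (k <= N)%N.
Proof.
elim: B => [|B IH] K g Hb Hi.
- exists 0%N => k Kk; have := Hb k Kk; lia.
- case: (Classical_Prop.classic (exists k0, K k0 /\ g k0 = B%:Z)).
  + move=> [k0 [K0 G0]].
    have HB : forall k, K k /\ k <> k0 -> 0 <= g k < B%:Z.
      move=> k [Kk nk]; have := Hb k Kk.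
      have : g k <> B%:Z.
        by move=> E; apply: nk; apply: Hi => //; rewrite E G0.
      lia.
    have HI : forall k l, K k /\ k <> k0 -> K l /\ l <> k0 -> g k = g l -> k = l.
      by move=> k l [Kk _] [Kl _]; apply: Hi.
    have [N HN] := IH (fun k => K k /\ k <> k0) g HB HI.
    exists (maxn N k0) => k Kk.
    have [->|nk] := eqVneq k k0; first exact: leq_maxr.
    apply: leq_trans (leq_maxl N k0); apply: HN; split=> //; exact/eqP.
  + move=> nex; apply: (IH K g) => // k Kk; have := Hb k Kk.
    have : g k <> B%:Z by move=> E; apply: nex; exists k.
    lia.
Qed.

Lemma key (c kk ll k l N : R) :
  det2 (c * (kk * (1 + 2 * phi) - (k + 2) * phi), c * phi ^+ 2)
       (c * (ll * (1 + 2 * phi) - (l + 2) * phi) + (kk - ll - N) * phi * (c * phi ^+ 2), c * phi ^+ 2)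
  = c ^+ 2 * phi ^+ 3 * (N * phi ^+ 2 - (k - l)).
Proof. rewrite /det2 /=; phring (- (c ^+ 2 * phi ^+ 2 * (kk - ll) * (phi + 1))). Qed.

Definition Aexp (k : nat) : R := ((k * (k + 1))%N%:R * (1 + 2 * phi) - (k%:R + 2) * phi)%R.

Lemma colpair_d (c : R) k : colpair (c *: d k) = (c * Aexp k, c * phi ^+ 2).
Proof.
rewrite /colpair /d /Aexp !mxE /=; congr pair; congr (_ * _).
rewrite -[((2 * k ^ 2 + k)%N)%:R]/(((2 * k ^ 2 + k)%N)%:R : R).
change (((k * (k + 1))%N)%:R + (((2 * k ^ 2 + k)%N)%:R - 2) * phi =
  ((k * (k + 1))%N)%:R * (1 + 2 * phi) - (k%:R + 2) * phi).
rewrite !natrD !natrM !natrD; ring.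
Qed.

Theorem proposition3p4 (m : int) :
  exists N : nat, forall k : nat,
    (1 < k)%N -> inS ((phi ^ (- m)) *: d k) -> (k <= N)%N.
Proof.
set c := phi ^ (- m).
have hp := phi_gt0.
have hc : 0 < c by rewrite /c exprz_gt0.
set W := c ^+ 2 * phi ^+ 5.
have hW : 0 < W by rewrite /W mulr_gt0 // exprn_gt0.
set B := (Num.truncn W).+1.
have hB : W < B%:R := truncnS_gt W.
have hp2 : 0 < phi ^+ 2 by rewrite exprn_gt0.
pose fl (k : nat) := Num.floor ((k%:R : R) / phi ^+ 2).
pose fr (k : nat) := (k%:R : R) / phi ^+ 2 - (fl k)%:~R.
have fr_b : forall k, 0 <= fr k < 1.
  move=> k; have := floor_itv ((k%:R : R) / phi ^+ 2); rewrite /fr /fl rmorphD /=.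
  case/andP => h1 h2; apply/andP; split; lra.
pose g k := Num.floor (fr k * B%:R).
have EB : ((B%:Z)%:~R : R) = B%:R by [].
suff [N HN] : exists N, forall k, (1 < k)%N /\ inS (c *: d k) -> (k <= N)%N.
  by exists N => k h1 h2; apply: HN.
apply: (php B _ g).
- move=> k _; rewrite /g floor_ge0 floor_lt_int EB.
  have /andP [h1 h2] := fr_b k.
  apply/andP; split; first exact: mulr_ge0.
  have : 0 < (B%:R : R) by rewrite ltr0n.
  nra.
- move=> k l [_ [gk [Hgk Ek]]] [_ [gl [Hgl El]]] Hg.
  have [t Ht] : O (c * Aexp k, c * phi ^+ 2).
    by have := O_gamma _ Hgk; rewrite -Ek colpair_d.
  have Ol : O (c * Aexp l, c * phi ^+ 2).
    by have := O_gamma _ Hgl; rewrite -El colpair_d.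
  set N' := fl k - fl l.
  have Ow := O_Tz ((k * (k + 1))%N%:Z - (l * (l + 1))%N%:Z - N') _ _ Ol.
  have G := pairwise _ _ Ht _ Ow.
  have En : (((k * (k + 1))%N%:Z - (l * (l + 1))%N%:Z - N')%:~R : R)
     = (k * (k + 1))%N%:R - (l * (l + 1))%N%:R - N'%:~R by rewrite !rmorphB.
  rewrite En /Aexp key in G.
  have Erel : N'%:~R * phi ^+ 2 - (k%:R - l%:R) = phi ^+ 2 * (fr l - fr k).
    rewrite /fr /N' rmorphB /=; field; exact: lt0r_neq0.
  have hX : ((g k)%:~R : R) <= fr k * B%:R < ((g k) + 1)%:~R := floor_itv _.
  have hY : ((g l)%:~R : R) <= fr l * B%:R < ((g l) + 1)%:~R := floor_itv _.
  rewrite Hg rmorphD /= in hX; rewrite rmorphD /= in hY.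
  set tt := fr l - fr k.
  have htB : -1 < tt * B%:R < 1.
    rewrite /tt mulrBl; case/andP: hX => hX1 hX2; case/andP: hY => hY1 hY2.
    apply/andP; split; lra.
  case: G => [D0|D1].
  - set X := N'%:~R * phi ^+ 2 - (k%:R - l%:R) in D0 Erel.
    have X0 : X = 0.
      have -> : X = (c ^+ 2 * phi ^+ 3)^-1 * (c ^+ 2 * phi ^+ 3 * X).
        by field; rewrite !lt0r_neq0.
      by rewrite D0 mulr0.
    have Ek' : ((k%:Z)%:~R : R) = k%:R by [].
    have El' : ((l%:Z)%:~R : R) = l%:R by [].
    have I0 : ((N' - (k%:Z - l%:Z))%:~R : R) + N'%:~R * phi = 0.
      rewrite /N' !rmorphB /= Ek' El' -X0 /X phi2 rmorphB /=; ring.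
    have N0 := irr _ _ I0.
    move: X0; rewrite /X N0 mul0r sub0r => /eqP; rewrite oppr_eq0 subr_eq0 eqr_nat.
    by move/eqP.
  - exfalso.
    have ED : c ^+ 2 * phi ^+ 3 * (N'%:~R * phi ^+ 2 - (k%:R - l%:R)) = W * tt.
      rewrite Erel /W /tt; ring.
    rewrite ED normrM (gtr0_norm hW) in D1.
    have hn : `|tt * B%:R| < 1 by rewrite ltr_norml.
    rewrite normrM (ger0_norm (ler0n _ _)) in hn.
    have := normr_ge0 tt.
    nra.
Qed.
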